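(* If $\mathrm{char}(\Bbbk)=2$, then $P$ is minimally generated by $g_1=z^2+x^2y+y^5z^3$ and $g_2=y^3+x^4+y^3z^5+x^2y^4z^3$; in particular $\mu(P)=2$.
   Context: $\Bbbk$ is a field. $\rho:\Bbbk[[x,y,z]]\to\Bbbk[[t]]$ is the $\Bbbk$-algebra morphism with $\rho(x)=t^6+t^{31}$, $\rho(y)=t^8$, $\rho(z)=t^{10}$, and $P=\ker\rho$. $\mu(P)$ is the minimal number of generators of $P$. *)

(* Defs.v *)
From HB Require Import structures.
From mathcomp Require Import all_boot all_algebra.
Set Implicit Arguments. Unset Strict Implicit. Unset Printing Implicit Defensive.
Import GRing.Theory.
Local Open Scope ring_scope.

(* Formal power series k[[x,y,z]]: a series is its coefficient function,
   f a b c = coefficient of x^a y^b z^c. *)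
Definition ps3 (k : fieldType) := nat -> nat -> nat -> k.

Definition ps3_zero (k : fieldType) : ps3 k := fun _ _ _ => 0.
Definition ps3_add (k : fieldType) (f g : ps3 k) : ps3 k :=
  fun a b c => f a b c + g a b c.
Definition ps3_mul (k : fieldType) (f g : ps3 k) : ps3 k :=
  fun a b c => \sum_(i < a.+1) \sum_(j < b.+1) \sum_(l < c.+1)
                 f i j l * g (a - i)%N (b - j)%N (c - l)%N.
Definition ps3_mono (k : fieldType) (a b c : nat) : ps3 k :=
  fun i j l => if [&& i == a, j == b & l == c] then 1 else 0.

(* Images of x, y, z in k[[t]] (they are polynomials in t). *)
Definition rho_x (k : fieldType) : {poly k} := 'X^6 + 'X^31.
Definition rho_y (k : fieldType) : {poly k} := 'X^8.
Definition rho_z (k : fieldType) : {poly k} := 'X^10.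

(* Since rho(x),rho(y),rho(z) have order >= 1,
   only a,b,c <= n contribute to the coefficient of t^n. *)
Definition rho (k : fieldType) (f : ps3 k) : nat -> k :=
  fun n => \sum_(a < n.+1) \sum_(b < n.+1) \sum_(c < n.+1)
             f a b c * (rho_x k ^+ a * rho_y k ^+ b * rho_z k ^+ c)`_n.

(* P = ker rho *)
Definition kerP (k : fieldType) (f : ps3 k) : Prop := forall n, rho f n = 0.

Definition in_ideal (k : fieldType) (gs : seq (ps3 k)) (f : ps3 k) : Prop :=
  exists h : nat -> ps3 k, forall a b c,
    f a b c = \sum_(i < size gs) ps3_mul (h i) (nth (ps3_zero k) gs i) a b c.

Definition generates (k : fieldType) (gs : seq (ps3 k)) (I : ps3 k -> Prop) :=
  forall f, I f <-> in_ideal gs f.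

Definition min_num_gens (k : fieldType) (I : ps3 k -> Prop) (n : nat) : Prop :=
  (exists gs : seq (ps3 k), size gs = n /\ generates gs I) /\
  (forall gs : seq (ps3 k), generates gs I -> (n <= size gs)%N).

Definition g1 (k : fieldType) : ps3 k :=
  ps3_add (ps3_add (ps3_mono k 0 0 2) (ps3_mono k 2 1 0)) (ps3_mono k 0 5 3).
Definition g2 (k : fieldType) : ps3 k :=
  ps3_add (ps3_add (ps3_add (ps3_mono k 0 3 0) (ps3_mono k 4 0 0))
                   (ps3_mono k 0 3 5)) (ps3_mono k 2 4 3).

(* Main.v *)
Require Import Defs.
From HB Require Import structures.
From mathcomp Require Import all_boot all_algebra.
From mathcomp Require Import ring zify.
Set Implicit Arguments. Unset Strict Implicit. Unset Printing Implicit Defensive.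
Import GRing.Theory.
Local Open Scope ring_scope.

Lemma sum_cut (R : nmodType) (F : nat -> R) m N : (m <= N)%N ->
  (forall i, (m <= i)%N -> F i = 0) -> \sum_(i < N) F i = \sum_(i < m) F i.
Proof.
move=> hmN hF; elim: N hmN => [|N IH] hmN.
  by have -> : m = 0%N by lia.
case: (ltngtP m N.+1) hmN => // [hlt|->] _; last by [].
by rewrite big_ord_recr /= hF ?addr0 ?IH //; lia.
Qed.

Lemma sum_pick (R : nmodType) (F : nat -> R) i0 N : (i0 < N)%N ->
  (forall i, (i < N)%N -> i != i0 -> F i = 0) -> \sum_(i < N) F i = F i0.
Proof.
move=> hi hF; rewrite (bigD1 (Ordinal hi)) //= big1 ?addr0 // => i hi'.
apply: hF => //; exact: ltn_ord.
Qed.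

Lemma sum_pick0 (R : nmodType) (F : nat -> R) N :
  (forall i, (i < N)%N -> F i = 0) -> \sum_(i < N) F i = 0.
Proof. by move=> hF; rewrite big1 // => i _; apply: hF. Qed.

Lemma sum_pickO (R : nmodType) N (F : 'I_N -> R) (i0 : 'I_N) :
  (forall i : 'I_N, (i : nat) != i0 -> F i = 0) -> \sum_(i < N) F i = F i0.
Proof.
move=> hF; rewrite (bigD1 i0) //= big1 ?addr0 //.
Qed.

Lemma mul_local (k : fieldType) (f f' g : ps3 k) a b c :
  (forall i j l, (i <= a)%N -> (j <= b)%N -> (l <= c)%N -> f i j l = f' i j l) ->
  ps3_mul f g a b c = ps3_mul f' g a b c.
Proof.
move=> h; apply: eq_bigr => i _; apply: eq_bigr => j _; apply: eq_bigr => l _.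
by rewrite h // -ltnS ltn_ord.
Qed.

Lemma mul_addr (k : fieldType) (f g h : ps3 k) a b c :
  ps3_mul f (ps3_add g h) a b c = ps3_mul f g a b c + ps3_mul f h a b c.
Proof.
rewrite /ps3_mul -!big_split; apply: eq_bigr => i _.
rewrite -!big_split; apply: eq_bigr => j _.
rewrite -!big_split; apply: eq_bigr => l _.
by rewrite /ps3_add mulrDr.
Qed.

Lemma mul_suml (k : fieldType) (F : nat -> ps3 k) N g a b c :
  ps3_mul (fun i j l => \sum_(m < N) F m i j l) g a b c =
  \sum_(m < N) ps3_mul (F m) g a b c.
Proof.
rewrite /ps3_mul; symmetry; rewrite exchange_big; apply: eq_bigr => i _.
rewrite exchange_big; apply: eq_bigr => j _.
rewrite exchange_big; apply: eq_bigr => l _.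
by rewrite mulr_suml.
Qed.

Lemma mul_monor (k : fieldType) (f : ps3 k) a0 b0 c0 a b c :
  ps3_mul f (ps3_mono k a0 b0 c0) a b c =
  if [&& (a0 <= a)%N, (b0 <= b)%N & (c0 <= c)%N] then f (a - a0)%N (b - b0)%N (c - c0)%N else 0.
Proof.
rewrite /ps3_mul /ps3_mono.
case: (leqP a0 a) => ha /=; last first.
  apply: big1 => i _; apply: big1 => j _; apply: big1 => l _.
  have := ltn_ord i => hi.
  have -> : (a - i == a0)%N = false by apply/eqP; lia.
  by rewrite ?eqxx ?andbF /= mulr0.
have hi0 : (a - a0 < a.+1)%N by lia.
rewrite (@sum_pickO _ _ _ (Ordinal hi0)) /=; last first.
  move=> i hne; apply: big1 => j _; apply: big1 => l _.
  have := ltn_ord i => hi.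
  have -> : (a - i == a0)%N = false by apply/eqP; lia.
  by rewrite ?eqxx ?andbF /= mulr0.
have -> : (a - (a - a0) = a0)%N by lia.
case: (leqP b0 b) => hb /=; last first.
  apply: big1 => j _; apply: big1 => l _.
  have := ltn_ord j => hj.
  have -> : (b - j == b0)%N = false by apply/eqP; lia.
  by rewrite ?eqxx ?andbF /= mulr0.
have hj0 : (b - b0 < b.+1)%N by lia.
rewrite (@sum_pickO _ _ _ (Ordinal hj0)) /=; last first.
  move=> j hne; apply: big1 => l _.
  have := ltn_ord j => hj.
  have -> : (b - j == b0)%N = false by apply/eqP; lia.
  by rewrite ?eqxx ?andbF /= mulr0.
have -> : (b - (b - b0) = b0)%N by lia.
case: (leqP c0 c) => hc /=; last first.
  apply: big1 => l _.
  have := ltn_ord l => hl.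
  have -> : (c - l == c0)%N = false by apply/eqP; lia.
  by rewrite ?eqxx ?andbF /= mulr0.
have hl0 : (c - c0 < c.+1)%N by lia.
rewrite (@sum_pickO _ _ _ (Ordinal hl0)) /=; last first.
  move=> l hne.
  have := ltn_ord l => hl.
  have -> : (c - l == c0)%N = false by apply/eqP; lia.
  by rewrite ?eqxx ?andbF /= mulr0.
have -> : (c - (c - c0) = c0)%N by lia.
by rewrite !eqxx mulr1.
Qed.

Lemma mul_monol (k : fieldType) (f : ps3 k) a b c :
  ps3_mul (ps3_mono k 0 0 0) f a b c = f a b c.
Proof.
rewrite /ps3_mul /ps3_mono.
rewrite (@sum_pickO _ _ _ ord0) /=; last first.
  move=> i hi; apply: big1 => j _; apply: big1 => l _.
  by rewrite (negbTE hi) mul0r.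
rewrite (@sum_pickO _ _ _ ord0) /=; last first.
  move=> j hj; apply: big1 => l _.
  by rewrite (negbTE hj) mul0r.
rewrite (@sum_pickO _ _ _ ord0) /=; last first.
  by move=> l hl; rewrite (negbTE hl) mul0r.
by rewrite mul1r !subn0.
Qed.

Definition ordge (k : fieldType) d (f : ps3 k) :=
  forall a b c, (a + b + c < d)%N -> f a b c = 0.

Lemma ordge_mul (k : fieldType) d1 d2 (f g : ps3 k) :
  ordge d1 f -> ordge d2 g -> ordge (d1 + d2) (ps3_mul f g).
Proof.
move=> hf hg a b c habc; apply: big1 => i _; apply: big1 => j _;
  apply: big1 => l _.
have := ltn_ord i; have := ltn_ord j; have := ltn_ord l => hl hj hi.
case: (ltnP (i + j + l) d1) => h1; first by rewrite hf // mul0r.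
by rewrite hg ?mulr0 //; lia.
Qed.

Lemma ordge_le (k : fieldType) d d' (f : ps3 k) : (d' <= d)%N -> ordge d f -> ordge d' f.
Proof. by move=> h hf a b c hh; apply: hf; lia. Qed.

Lemma ordge_add (k : fieldType) d (f g : ps3 k) : ordge d f -> ordge d g -> ordge d (ps3_add f g).
Proof. by move=> hf hg a b c h; rewrite /ps3_add hf ?hg ?addr0. Qed.

Lemma ordge_mono (k : fieldType) a0 b0 c0 : ordge (a0 + b0 + c0) (ps3_mono k a0 b0 c0).
Proof.
move=> a b c h; rewrite /ps3_mono.
case: (a =P a0) => [ea|]; case: (b =P b0) => [eb|]; case: (c =P c0) => [ec|] //=; lia.
Qed.

Definition eqt (k : fieldType) n (p q : {poly k}) := forall i, (i <= n)%N -> p`_i = q`_i.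

Lemma eqt_refl (k : fieldType) n (p : {poly k}) : eqt n p p.
Proof. by []. Qed.
Lemma eqt_trans (k : fieldType) n (p q r : {poly k}) : eqt n p q -> eqt n q r -> eqt n p r.
Proof. by move=> h1 h2 i hi; rewrite h1 ?h2. Qed.
Lemma eqt_mul (k : fieldType) n (p p' q q' : {poly k}) :
  eqt n p p' -> eqt n q q' -> eqt n (p * q) (p' * q').
Proof.
move=> h1 h2 i hi; rewrite !coefM; apply: eq_bigr => j _.
have := ltn_ord j => hj.
by rewrite h1 ?h2 //; lia.
Qed.
Lemma eqt_sum (k : fieldType) n N (F G : 'I_N -> {poly k}) :
  (forall i, eqt n (F i) (G i)) -> eqt n (\sum_(i < N) F i) (\sum_(i < N) G i).
Proof. by move=> h i hi; rewrite !coef_sum; apply: eq_bigr => j _; rewrite h. Qed.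

Lemma coef_mul_Xfactor (k : fieldType) (u q : {poly k}) a j :
  u`_0 = 0 -> (j < a)%N -> (q * u ^+ a)`_j = 0.
Proof.
move=> hu hj.
have eu : u = drop_poly 1 u * 'X^1.
  have ht : take_poly 1 u = 0.
    apply/polyP => i; rewrite coef_take_poly coef0.
    by case: i => //=.
  by rewrite -{1}(poly_take_drop 1 u) ht add0r.
rewrite eu exprMn -exprM mulrA coefMXn.
by case: ifP => //; lia.
Qed.

Lemma L1 (k : fieldType) (aR : nzRingType) (f : {rmorphism aR -> {poly k}}) (u : {poly k})
  (cf : commr_rmorph f u) (p : {poly aR}) n :
  u`_0 = 0 -> eqt n (horner_morph cf p) (\sum_(a < n.+1) f p`_a * u ^+ a).
Proof.
move=> hu i hi.
rewrite /horner_morph.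
set M := maxn (size p) n.+1.
rewrite (@horner_coef_wide _ M); last first.
  apply: leq_trans (size_poly _ _) _; exact: leq_maxl.
rewrite !coef_sum.
rewrite (@sum_cut _ (fun a => ((map_poly f p)`_a * u ^+ a)`_i) n.+1); last 2 first.
- exact: leq_maxr.
- by move=> a ha; rewrite coef_mul_Xfactor //; lia.
apply: eq_bigr => a _; by rewrite coef_map.
Qed.

Definition cZ (k : fieldType) : commr_rmorph (polyC : k -> {poly k}) (rho_z k) :=
  fun a => mulrC _ _.
Notation Gz kk := (horner_morph (@cZ kk)).
Definition cY (k : fieldType) : commr_rmorph (Gz k) (rho_y k) := fun a => mulrC _ _.
Notation Fy kk := (horner_morph (@cY kk)).
Definition cX (k : fieldType) : commr_rmorph (Fy k) (rho_x k) := fun a => mulrC _ _.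
Notation ev kk := (horner_morph (@cX kk)).

Definition Mono (k : fieldType) a b c : {poly k} := rho_x k ^+ a * rho_y k ^+ b * rho_z k ^+ c.

Lemma rx0 (k : fieldType) : (rho_x k)`_0 = 0.
Proof. by rewrite /rho_x coefD !coefXn /= addr0. Qed.
Lemma ry0 (k : fieldType) : (rho_y k)`_0 = 0.
Proof. by rewrite /rho_y coefXn. Qed.
Lemma rz0 (k : fieldType) : (rho_z k)`_0 = 0.
Proof. by rewrite /rho_z coefXn. Qed.

Lemma ev_coef (k : fieldType) (P : {poly {poly {poly k}}}) n :
  (ev k P)`_n = \sum_(a < n.+1) \sum_(b < n.+1) \sum_(c < n.+1)
     P`_a`_b`_c * (Mono k a b c)`_n.
Proof.
have h1 := @L1 k _ _ _ (@cX k) P n (rx0 k).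
rewrite h1 // coef_sum; apply: eq_bigr => a _.
have h2 := @L1 k _ _ _ (@cY k) P`_a n (ry0 k).
rewrite (@eqt_mul k n _ (\sum_(b < n.+1) Gz k P`_a`_b * rho_y k ^+ b) _ (rho_x k ^+ a)) //.
rewrite mulr_suml coef_sum; apply: eq_bigr => b _.
have h3 := @L1 k _ _ _ (@cZ k) P`_a`_b n (rz0 k).
rewrite (@eqt_mul k n _ ((\sum_(c < n.+1) (P`_a`_b`_c)%:P * rho_z k ^+ c) * rho_y k ^+ b)
   _ (rho_x k ^+ a)) //; last by apply: eqt_mul.
rewrite !mulr_suml coef_sum; apply: eq_bigr => c _.
rewrite (_ : (P`_a`_b`_c)%:P * rho_z k ^+ c * rho_y k ^+ b * rho_x k ^+ a =
   (P`_a`_b`_c)%:P * Mono k a b c); last by rewrite /Mono; ring.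
by rewrite coefCM.
Qed.

Definition trunc (k : fieldType) N (f : ps3 k) : {poly {poly {poly k}}} :=
  \poly_(a < N.+1) \poly_(b < N.+1) \poly_(c < N.+1) f a b c.

Lemma coef_trunc (k : fieldType) N (f : ps3 k) a b c :
  (trunc N f)`_a`_b`_c = if [&& (a <= N)%N, (b <= N)%N & (c <= N)%N] then f a b c else 0.
Proof.
rewrite /trunc coef_poly; case: (ltnP a N.+1) => ha /=; last first.
  rewrite ?coef0; have -> : (a <= N)%N = false by lia.
  by rewrite ?andbF.
rewrite coef_poly; case: (ltnP b N.+1) => hb /=; last first.
  rewrite ?coef0; have -> : (b <= N)%N = false by lia.
  by rewrite ?andbF.
rewrite coef_poly; case: (ltnP c N.+1) => hc /=; last first.
  rewrite ?coef0; have -> : (c <= N)%N = false by lia.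
  by rewrite ?andbF.
have -> : (a <= N)%N by lia.
have -> : (b <= N)%N by lia.
by have -> : (c <= N)%N by lia.
Qed.

Lemma mul_trunc (k : fieldType) N (f g : ps3 k) a b c :
  (a <= N)%N -> (b <= N)%N -> (c <= N)%N ->
  ps3_mul f g a b c = (trunc N f * trunc N g)`_a`_b`_c.
Proof.
move=> ha hb hc.
rewrite coefM !coef_sum; apply: eq_bigr => i _.
rewrite coefM !coef_sum; apply: eq_bigr => j _.
rewrite coefM; apply: eq_bigr => l _.
have := ltn_ord i; have := ltn_ord j; have := ltn_ord l => hl hj hi.
rewrite !coef_trunc.
have -> : [&& (i <= N)%N, (j <= N)%N & (l <= N)%N] by apply/and3P; split; lia.
have -> : [&& (a - i <= N)%N, (b - j <= N)%N & (c - l <= N)%N] by apply/and3P; split; lia.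
by [].
Qed.

Lemma rho_trunc (k : fieldType) N (f : ps3 k) n : (n <= N)%N ->
  rho f n = (ev k (trunc N f))`_n.
Proof.
move=> hn; rewrite ev_coef /rho; apply: eq_bigr => a _; apply: eq_bigr => b _;
  apply: eq_bigr => c _.
have := ltn_ord a; have := ltn_ord b; have := ltn_ord c => hc hb ha.
rewrite coef_trunc.
have -> : [&& (a <= N)%N, (b <= N)%N & (c <= N)%N] by apply/and3P; split; lia.
by [].
Qed.

Lemma rho_mul_zero (k : fieldType) (h g : ps3 k) M0 n :
  (forall M, (M0 <= M)%N -> ev k (trunc M g) = 0) -> rho (ps3_mul h g) n = 0.
Proof.
move=> hg; set M := maxn n M0.
rewrite (@rho_trunc _ M) ?leq_maxl //.
have -> : (ev k (trunc M (ps3_mul h g)))`_n = (ev k (trunc M h * trunc M g))`_n.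
  rewrite !ev_coef; apply: eq_bigr => a _; apply: eq_bigr => b _;
    apply: eq_bigr => c _.
  have := ltn_ord a; have := ltn_ord b; have := ltn_ord c => hc hb ha.
  have hnM : (n <= M)%N by exact: leq_maxl.
  rewrite coef_trunc (@mul_trunc _ M); try lia.
  have -> : [&& (a <= M)%N, (b <= M)%N & (c <= M)%N] by apply/and3P; split; lia.
  by [].
by rewrite rmorphM /= hg ?leq_maxr // mulr0 coef0.
Qed.

Lemma rho_add (k : fieldType) (f g : ps3 k) n :
  rho (ps3_add f g) n = rho f n + rho g n.
Proof.
rewrite /rho -big_split; apply: eq_bigr => a _.
rewrite -big_split; apply: eq_bigr => b _.
rewrite -big_split; apply: eq_bigr => c _.
by rewrite /ps3_add mulrDl.
Qed.

Lemma rho_sumf (k : fieldType) (f : ps3 k) m (F : nat -> ps3 k) n :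
  (forall a b c, f a b c = \sum_(i < m) F i a b c) ->
  rho f n = \sum_(i < m) rho (F i) n.
Proof.
move=> hf; rewrite /rho; symmetry.
rewrite exchange_big; apply: eq_bigr => a _.
rewrite exchange_big; apply: eq_bigr => b _.
rewrite exchange_big; apply: eq_bigr => c _.
by rewrite hf mulr_suml.
Qed.

Lemma rho_ext (k : fieldType) (f g : ps3 k) n :
  (forall a b c, f a b c = g a b c) -> rho f n = rho g n.
Proof. by move=> h; rewrite /rho; apply: eq_bigr => a _; apply: eq_bigr => b _; apply: eq_bigr => c _; rewrite h. Qed.

Lemma trunc_add (k : fieldType) N (f g : ps3 k) :
  trunc N (ps3_add f g) = trunc N f + trunc N g.
Proof.
apply/polyP => a; rewrite coefD; apply/polyP => b; rewrite coefD; apply/polyP => c.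
by rewrite coefD !coef_trunc /ps3_add; case: ifP => //; rewrite addr0.
Qed.

Definition monoQ (k : fieldType) a b c : {poly {poly {poly k}}} :=
  'X^a * ('X^b * ('X^c)%:P)%:P.

Lemma trunc_mono (k : fieldType) N a0 b0 c0 :
  (a0 <= N)%N -> (b0 <= N)%N -> (c0 <= N)%N ->
  trunc N (ps3_mono k a0 b0 c0) = monoQ k a0 b0 c0.
Proof.
move=> ha hb hc.
apply/polyP => a; apply/polyP => b; apply/polyP => c.
rewrite coef_trunc /monoQ /ps3_mono coefXnM.
case: (ltnP a a0) => h1.
  rewrite !coef0; case: ifP => // /and3P [h2 _ _]; case: ifP => // /and3P [/eqP h3 _ _]; lia.
rewrite coefC; case: (a - a0 =P 0)%N => h2; last first.
  rewrite !coef0; case: ifP => // _; case: ifP => // /and3P [/eqP h3 _ _]; lia.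
have ea : a = a0 by lia.
rewrite ea eqxx /= coefXnM.
case: (ltnP b b0) => h4.
  rewrite !coef0; case: ifP => // /and3P [_ h5 _]; case: ifP => // /andP [/eqP h3 _]; lia.
rewrite coefC; case: (b - b0 =P 0)%N => h5; last first.
  rewrite !coef0; case: ifP => // _; case: ifP => // /andP [/eqP h3 _]; lia.
have eb : b = b0 by lia.
rewrite eb eqxx /= coefXn.
case: (c =P c0) => [->|hne]; first by rewrite ha hb hc /=.
by case: ifP.
Qed.

Lemma ev_monoQ (k : fieldType) a b c : ev k (monoQ k a b c) = Mono k a b c.
Proof.
rewrite /monoQ rmorphM rmorphXn /= horner_morphX horner_morphC rmorphM rmorphXn /= horner_morphX.
by rewrite horner_morphC rmorphXn /= horner_morphX /Mono mulrA.
Qed.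

Lemma two0 (k : fieldType) (hchar : (2%N \in [pchar k])%R) : (2%:R : {poly k}) = 0.
Proof. by rewrite -polyC_natr (pcharf0 hchar). Qed.

Lemma ev_g1 (k : fieldType) (hchar : (2%N \in [pchar k])%R) M : (5 <= M)%N ->
  ev k (trunc M (g1 k)) = 0.
Proof.
move=> hM; rewrite /g1 !trunc_add !trunc_mono //; try lia.
rewrite !rmorphD /= !ev_monoQ /Mono /rho_x /rho_y /rho_z.
transitivity (2%:R * ('X^20 + 'X^45 + 'X^70) : {poly k}); first ring.
by rewrite two0 // mul0r.
Qed.

Lemma ev_g2 (k : fieldType) (hchar : (2%N \in [pchar k])%R) M : (5 <= M)%N ->
  ev k (trunc M (g2 k)) = 0.
Proof.
move=> hM; rewrite /g2 !trunc_add !trunc_mono //; try lia.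
rewrite !rmorphD /= !ev_monoQ /Mono /rho_x /rho_y /rho_z.
transitivity (2%:R * ('X^24 + 2%:R * 'X^49 + 4%:R * 'X^74 + 3%:R * 'X^99 + 'X^124) : {poly k});
  first ring.
by rewrite two0 // mul0r.
Qed.

Lemma ideal_ker (k : fieldType) (hchar : (2%N \in [pchar k])%R) (f : ps3 k) :
  in_ideal [:: g1 k; g2 k] f -> kerP f.
Proof.
move=> [h hf] n.
rewrite (rho_sumf (F := fun i => ps3_mul (h i) (nth (ps3_zero k) [:: g1 k; g2 k] i)) n hf).
rewrite !big_ord_recr big_ord0 /= add0r.
rewrite (@rho_mul_zero _ _ _ 5) ?(@rho_mul_zero _ _ _ 5) ?addr0 //.
- by move=> M hM; apply: ev_g2.
- by move=> M hM; apply: ev_g1.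
Qed.

Definition red (k : fieldType) (f : ps3 k) : ps3 k :=
  fun a b c => if (b < 3)%N && (c < 2)%N then f a b c else 0.
Definition qa (k : fieldType) (f : ps3 k) : ps3 k := fun a b c => f a b c.+2.
Definition qb (k : fieldType) (f : ps3 k) : ps3 k :=
  fun a b c => if (c < 2)%N then f a b.+3 c else 0.
Definition t1 (k : fieldType) : ps3 k := ps3_add (ps3_mono k 2 1 0) (ps3_mono k 0 5 3).
Definition t2 (k : fieldType) : ps3 k :=
  ps3_add (ps3_add (ps3_mono k 4 0 0) (ps3_mono k 0 3 5)) (ps3_mono k 2 4 3).
Definition step (k : fieldType) (f : ps3 k) : ps3 k :=
  fun a b c => - (ps3_mul (qa f) (t1 k) a b c + ps3_mul (qb f) (t2 k) a b c).

Lemma step_eq (k : fieldType) (f : ps3 k) a b c :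
  f a b c = red f a b c + ps3_mul (qa f) (g1 k) a b c + ps3_mul (qb f) (g2 k) a b c
            + step f a b c.
Proof.
have hfd : f a b c = red f a b c +
   ps3_mul (qa f) (ps3_mono k 0 0 2) a b c + ps3_mul (qb f) (ps3_mono k 0 3 0) a b c.
  rewrite !mul_monor /red /qa /qb /= !subn0.
  case: (ltnP b 3) => hb; case: (ltnP c 2) => hc /=.
  - by rewrite addr0 addr0.
  - have -> : (c - 2).+2 = c by lia.
    by rewrite add0r addr0.
  - have -> : (b - 3).+3 = b by lia.
    by rewrite add0r add0r.
  - have -> : (c - 2).+2 = c by lia.
    by rewrite add0r addr0.
rewrite /step /g1 /g2 /t1 /t2 !mul_addr.
rewrite {1}hfd; ring.
Qed.

Fixpoint iterF (k : fieldType) (f : ps3 k) i : ps3 k :=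
  match i with 0 => f | i'.+1 => step (iterF f i') end.

Lemma ordge_qa (k : fieldType) d (f : ps3 k) : ordge d f -> ordge (d - 2) (qa f).
Proof. by move=> h a b c hh; rewrite /qa h //; lia. Qed.
Lemma ordge_qb (k : fieldType) d (f : ps3 k) : ordge d f -> ordge (d - 3) (qb f).
Proof. by move=> h a b c hh; rewrite /qb h ?if_same //; lia. Qed.

Lemma ordge_step (k : fieldType) d (f : ps3 k) : ordge d f -> ordge d.+1 (step f).
Proof.
move=> h.
have h1 : ordge d.+1 (ps3_mul (qa f) (t1 k)).
  apply: (@ordge_le _ (d - 2 + 3)); first lia.
  apply: ordge_mul; first exact: ordge_qa.
  apply: ordge_add; first exact: (@ordge_mono k 2 1 0).
  by apply: (@ordge_le _ (0+5+3)) => //; exact: (@ordge_mono k 0 5 3).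
have h2 : ordge d.+1 (ps3_mul (qb f) (t2 k)).
  apply: (@ordge_le _ (d - 3 + 4)); first lia.
  apply: ordge_mul; first exact: ordge_qb.
  apply: ordge_add; first apply: ordge_add; first exact: (@ordge_mono k 4 0 0).
    by apply: (@ordge_le _ (0+3+5)) => //; exact: (@ordge_mono k 0 3 5).
  by apply: (@ordge_le _ (2+4+3)) => //; exact: (@ordge_mono k 2 4 3).
by move=> a b c hh; rewrite /step h1 ?h2 // addr0 oppr0.
Qed.

Lemma ordge_iter (k : fieldType) (f : ps3 k) i : ordge i (iterF f i).
Proof.
elim: i => [|i IH] /=; first by move=> a b c.
exact: ordge_step.
Qed.

Lemma tele (k : fieldType) (f : ps3 k) N a b c :
  f a b c = \sum_(i < N) (red (iterF f i) a b c + ps3_mul (qa (iterF f i)) (g1 k) a b c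
              + ps3_mul (qb (iterF f i)) (g2 k) a b c) + iterF f N a b c.
Proof.
elim: N => [|N IH]; first by rewrite big_ord0 add0r.
by rewrite big_ord_recr /= IH -addrA -step_eq.
Qed.

Definition Rr (k : fieldType) (f : ps3 k) : ps3 k :=
  fun a b c => \sum_(i < a + b + c + 1) red (iterF f i) a b c.
Definition QA (k : fieldType) (f : ps3 k) : ps3 k :=
  fun a b c => \sum_(i < a + b + c + 3) qa (iterF f i) a b c.
Definition QB (k : fieldType) (f : ps3 k) : ps3 k :=
  fun a b c => \sum_(i < a + b + c + 4) qb (iterF f i) a b c.

Lemma division (k : fieldType) (f : ps3 k) a b c :
  f a b c = Rr f a b c + ps3_mul (QA f) (g1 k) a b c + ps3_mul (QB f) (g2 k) a b c.
Proof.
rewrite (tele f (a + b + c + 4)).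
have -> : iterF f (a + b + c + 4) a b c = 0 by apply: ordge_iter; lia.
rewrite addr0 !big_split /=.
congr (_ + _ + _).
- rewrite /Rr (@sum_cut _ (fun i => red (iterF f i) a b c) (a + b + c + 1)) //; first lia.
  move=> i hi; rewrite /red ordge_iter ?if_same //; lia.
- rewrite -(mul_suml (fun i => qa (iterF f i))); apply: mul_local => i j l hi hj hl.
  rewrite /QA (@sum_cut _ (fun m => qa (iterF f m) i j l) (i + j + l + 3)) //; first lia.
  by move=> m hm; rewrite /qa ordge_iter //; lia.
- rewrite -(mul_suml (fun i => qb (iterF f i))); apply: mul_local => i j l hi hj hl.
  rewrite /QB (@sum_cut _ (fun m => qb (iterF f m) i j l) (i + j + l + 4)) //; first lia.
  by move=> m hm; rewrite /qb ordge_iter ?if_same //; lia.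
Qed.

Lemma Rr_red (k : fieldType) (f : ps3 k) a b c :
  ~~ ((b < 3)%N && (c < 2)%N) -> Rr f a b c = 0.
Proof. by move=> h; rewrite /Rr big1 // => i _; rewrite /red (negbTE h). Qed.

Lemma Rr_ker (k : fieldType) (hchar : (2%N \in [pchar k])%R) (f : ps3 k) :
  kerP f -> kerP (Rr f).
Proof.
move=> hf n.
have := hf n.
rewrite (@rho_ext _ f (ps3_add (ps3_add (Rr f) (ps3_mul (QA f) (g1 k))) (ps3_mul (QB f) (g2 k))));
  last by move=> a b c; rewrite /ps3_add -division.
rewrite !rho_add (@rho_mul_zero _ _ _ 5) ?(@rho_mul_zero _ _ _ 5) ?addr0 //.
- by move=> M hM; first [apply: ev_g1 | apply: ev_g2].
- by move=> M hM; first [apply: ev_g1 | apply: ev_g2].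
Qed.

Lemma sum_eq_range (R : nmodType) (F : nat -> R) n1 n2 :
  (forall i, (n1 <= i)%N -> F i = 0) -> (forall i, (n2 <= i)%N -> F i = 0) ->
  \sum_(i < n1) F i = \sum_(i < n2) F i.
Proof.
move=> h1 h2; case: (leqP n1 n2) => h.
  by rewrite (@sum_cut _ F n1 n2).
by rewrite (@sum_cut _ F n2 n1) //; exact: ltnW.
Qed.

Lemma pw25 (k : fieldType) a j : (j < 25)%N ->
  ((1 + 'X^25 : {poly k}) ^+ a)`_j = (j == 0)%:R.
Proof.
move=> hj; elim: a => [|a IH]; first by rewrite expr0 coef1.
by rewrite exprSr mulrDr mulr1 coefD coefMXn IH (_ : (j < 25)%N = true) // addr0.
Qed.

Lemma rx_eq (k : fieldType) : rho_x k = (1 + 'X^25) * 'X^6.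
Proof. by rewrite /rho_x; ring. Qed.

Lemma Xpow_eq (k : fieldType) a : rho_x k ^+ a = (1 + 'X^25) ^+ a * 'X^(6 * a).
Proof. by rewrite rx_eq exprMn -exprM mulnC. Qed.

Lemma Mono_eq (k : fieldType) a b c :
  Mono k a b c = (1 + 'X^25) ^+ a * 'X^(6 * a + 8 * b + 10 * c).
Proof.
rewrite /Mono Xpow_eq /rho_y /rho_z -!exprM !exprD.
ring.
Qed.

Lemma Mono_lt (k : fieldType) a b c n : (n < 6 * a + 8 * b + 10 * c)%N ->
  (Mono k a b c)`_n = 0.
Proof. by move=> h; rewrite Mono_eq coefMXn h. Qed.

Lemma Mono_small (k : fieldType) a b c n : (n < 25)%N ->
  (Mono k a b c)`_n = (n == 6 * a + 8 * b + 10 * c)%:R.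
Proof.
move=> h; rewrite Mono_eq coefMXn; case: ltnP => h2.
  by have -> : (n == 6 * a + 8 * b + 10 * c) = false by apply/eqP; lia.
rewrite pw25; last by lia.
congr (_%:R); apply/eqP; case: eqP => [h3|h3]; apply/eqP; first lia.
by apply/negP => /eqP h4; apply: h3; lia.
Qed.

Definition e6 (i : nat) : nat :=
  match i with 0%N => 0%N | 1%N => 8%N | 2%N => 10%N | 3%N => 41%N | 4%N => 43%N | _ => 51%N end.
Definition shiftS (k : fieldType) s (g : nat -> k) a : k :=
  if (s <= a)%N then g (a - s)%N else 0.
Definition csr (k : fieldType) (r : ps3 k) (i a : nat) : k :=
  match i with
  | 0%N => r a 0 0 - shiftS 3 (fun a => r a 1 1) a
  | 1%N => r a 1 0 - shiftS 3 (fun a => r a 2 1) a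
  | 2%N => r a 0 1 - shiftS 1 (fun a => r a 2 0) a
  | 3%N => r a 2 0
  | 4%N => r a 1 1
  | _ => r a 2 1
  end.
Definition Pbc (k : fieldType) (r : ps3 k) N b c : {poly k} := \poly_(a < N.+1) r a b c.
Definition Cp (k : fieldType) (r : ps3 k) N (i : nat) : {poly k} :=
  match i with
  | 0%N => Pbc r N 0 0 - 'X^3 * Pbc r N 1 1
  | 1%N => Pbc r N 1 0 - 'X^3 * Pbc r N 2 1
  | 2%N => Pbc r N 0 1 - 'X^1 * Pbc r N 2 0
  | 3%N => Pbc r N 2 0
  | 4%N => Pbc r N 1 1
  | _ => Pbc r N 2 1
  end.
Definition bet (k : fieldType) (i : nat) : {poly k} :=
  match i with
  | 0%N => 1
  | 1%N => rho_y k
  | 2%N => rho_z k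
  | 3%N => rho_y k ^+ 2 + rho_x k * rho_z k
  | 4%N => rho_y k * rho_z k + rho_x k ^+ 3
  | _ => rho_y k ^+ 2 * rho_z k + rho_x k ^+ 3 * rho_y k
  end.
Definition gam (k : fieldType) (i : nat) : {poly k} :=
  match i with 4%N | 5%N => 1 + 'X^25 + 'X^50 | _ => 1 end.

Lemma coef_Pbc (k : fieldType) (r : ps3 k) N b c a : (a <= N)%N -> (Pbc r N b c)`_a = r a b c.
Proof. by move=> h; rewrite coef_poly ltnS h. Qed.

Lemma coef_Cp (k : fieldType) (r : ps3 k) N i a : (a <= N)%N -> (Cp r N i)`_a = csr r i a.
Proof.
move=> h.
case: i => [|[|[|[|[|i]]]]] /=; rewrite ?coefB ?coefXnM ?coef_Pbc //= /shiftS;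
  try (by case: ltnP); lia.
Qed.

Lemma gam0 (k : fieldType) i : (gam k i)`_0 = 1.
Proof.
case: i => [|[|[|[|[|[|i]]]]]] /=; rewrite ?coef1 //.
- by rewrite !coefD coef1 !coefXn /= !addr0.
- by rewrite !coefD coef1 !coefXn /= !addr0.
Qed.

Lemma bet_eq (k : fieldType) (hchar : (2%N \in [pchar k])%R) i : (i < 6)%N ->
  bet k i = gam k i * 'X^(e6 i).
Proof.
have h2 := two0 hchar.
case: i => [|[|[|[|[|[|i]]]]]] //= _; rewrite /rho_x /rho_y /rho_z.
- by rewrite mul1r expr0.
- by rewrite mul1r.
- by rewrite mul1r.
- transitivity (2%:R * 'X^16 + 1 * 'X^41 : {poly k}); first ring.
  by rewrite h2 mul0r add0r.
- transitivity (2%:R * ('X^18 + 'X^43 + 'X^68) + (1 + 'X^25 + 'X^50) * 'X^43 : {poly k});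
    first ring.
  by rewrite h2 mul0r add0r.
- transitivity (2%:R * ('X^26 + 'X^51 + 'X^76) + (1 + 'X^25 + 'X^50) * 'X^51 : {poly k});
    first ring.
  by rewrite h2 mul0r add0r.
Qed.

Lemma e6_inj i j a a' : (i < 6)%N -> (j < 6)%N ->
  (6 * a + e6 i = 6 * a' + e6 j)%N -> i = j.
Proof.
by case: i => [|[|[|[|[|[|i]]]]]] //; case: j => [|[|[|[|[|[|j]]]]]] //= _ _; lia.
Qed.

Lemma coef_term (k : fieldType) (p g : {poly k}) e n S : (size p <= S)%N ->
  ((p \Po rho_x k) * (g * 'X^e))`_n =
  \sum_(a < S) p`_a * (((1 + 'X^25) ^+ a * g) * 'X^(6 * a + e))`_n.
Proof.
move=> hS; rewrite comp_polyE.
rewrite -(@sum_cut _ (fun a => p`_a *: rho_x k ^+ a) (size p) S) //; last first.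
  by move=> a ha; rewrite nth_default // scale0r.
rewrite mulr_suml coef_sum; apply: eq_bigr => a _.
rewrite -scalerAl coefZ.
have -> : rho_x k ^+ a * (g * 'X^e) = ((1 + 'X^25) ^+ a * g) * 'X^(6 * a + e).
  by rewrite Xpow_eq exprD; ring.
by [].
Qed.

Lemma Ki (k : fieldType) (p g : {poly k}) e m :
  (forall a, (6 * a + e <= m)%N -> p`_a = 0) ->
  ((p \Po rho_x k) * (g * 'X^e))`_m = 0.
Proof.
move=> hp; rewrite (@coef_term _ _ _ _ _ (size p)) //.
apply: big1 => a _; case: (leqP (6 * a + e) m) => h.
  by rewrite hp // mul0r.
by rewrite coefMXn h mulr0.
Qed.

Lemma Kii (k : fieldType) (p g : {poly k}) e o :
  (forall a, (a < o)%N -> p`_a = 0) -> g`_0 = 1 ->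
  ((p \Po rho_x k) * (g * 'X^e))`_(6 * o + e) = p`_o.
Proof.
move=> hp hg; rewrite (@coef_term _ _ _ _ _ (maxn (size p) o.+1)) ?leq_maxl //.
have ho : (o < maxn (size p) o.+1)%N by rewrite leq_max ltnSn orbT.
rewrite (@sum_pickO _ _ _ (Ordinal ho)) /=; last first.
  move=> a hne; case: (ltngtP a o) => h.
  - by rewrite hp // mul0r.
  - by rewrite coefMXn (_ : (6 * o + e < 6 * a + e)%N = true) ?mulr0 //; lia.
  - by move: hne; rewrite h eqxx.
by rewrite coefMXn ltnn subnn coef0M pw25 // hg !mul1r mulr1.
Qed.

Lemma S2 (k : fieldType) (r : ps3 k) N b c m :
  ((Pbc r N b c \Po rho_x k) * rho_y k ^+ b * rho_z k ^+ c)`_m =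
  \sum_(a < N.+1) r a b c * (Mono k a b c)`_m.
Proof.
rewrite /Pbc poly_def linear_sum /= !mulr_suml coef_sum; apply: eq_bigr => a _.
by rewrite comp_polyZ comp_Xn_poly -!scalerAl coefZ.
Qed.

Lemma S1 (k : fieldType) (r : ps3 k) N m :
  (forall a b c, ~~ ((b < 3)%N && (c < 2)%N) -> r a b c = 0) -> (m <= N)%N ->
  rho r m = \sum_(b < 3) \sum_(c < 2) \sum_(a < N.+1) r a b c * (Mono k a b c)`_m.
Proof.
move=> hred hmN; rewrite /rho.
transitivity (\sum_(b < m.+1) \sum_(c < m.+1) \sum_(a < m.+1) r a b c * (Mono k a b c)`_m).
  rewrite exchange_big; apply: eq_bigr => b _; by rewrite exchange_big.
transitivity (\sum_(b < m.+1) \sum_(c < 2) \sum_(a < N.+1) r a b c * (Mono k a b c)`_m).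
  apply: eq_bigr => b _.
  rewrite (@sum_eq_range _ (fun c => \sum_(a < m.+1) r a b c * (Mono k a b c)`_m) m.+1 2);
    last 2 first.
  - by move=> c hc; apply: big1 => a _; rewrite Mono_lt ?mulr0 //; lia.
  - by move=> c hc; apply: big1 => a _; rewrite hred ?mul0r //; apply/negP => /andP [_ h]; lia.
  apply: eq_bigr => c _.
  apply: (@sum_eq_range _ (fun a => r a b c * (Mono k a b c)`_m)).
  - by move=> a ha; rewrite Mono_lt ?mulr0 //; lia.
  - by move=> a ha; rewrite Mono_lt ?mulr0 //; lia.
apply: (@sum_eq_range _ (fun b => \sum_(c < 2) \sum_(a < N.+1) r a b c * (Mono k a b c)`_m)).
- by move=> b hb; apply: big1 => c _; apply: big1 => a _; rewrite Mono_lt ?mulr0 //; lia.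
- by move=> b hb; apply: big1 => c _; apply: big1 => a _; rewrite hred ?mul0r //;
    apply/negP => /andP [h _]; lia.
Qed.

Lemma S3 (k : fieldType) (r : ps3 k) N :
  \sum_(b < 3) \sum_(c < 2) (Pbc r N b c \Po rho_x k) * rho_y k ^+ b * rho_z k ^+ c =
  \sum_(i < 6) (Cp r N i \Po rho_x k) * bet k i.
Proof.
rewrite !big_ord_recr !big_ord0 /= /Cp /bet.
rewrite !comp_polyB !comp_polyM !comp_Xn_poly.
ring.
Qed.

Lemma allz (k : fieldType) (r : ps3 k) :
  (forall a b c, ~~ ((b < 3)%N && (c < 2)%N) -> r a b c = 0) ->
  (forall i a, (i < 6)%N -> csr r i a = 0) -> forall a b c, r a b c = 0.
Proof.
move=> hred hz a b c.
case: (boolP ((b < 3)%N && (c < 2)%N)) => h; last by apply: hred.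
have h20 a' : r a' 2 0 = 0 by exact: (hz 3%N a').
have h11 a' : r a' 1 1 = 0 by exact: (hz 4%N a').
have h21 a' : r a' 2 1 = 0 by exact: (hz 5%N a').
have h00 a' : r a' 0 0 = 0.
  by have := hz 0%N a' isT; rewrite /= /shiftS h11 if_same subr0.
have h10 a' : r a' 1 0 = 0.
  by have := hz 1%N a' isT; rewrite /= /shiftS h21 if_same subr0.
have h01 a' : r a' 0 1 = 0.
  by have := hz 2%N a' isT; rewrite /= /shiftS h20 if_same subr0.
move: h => /andP [hb hc].
by case: b hb => [|[|[|b]]] // _; case: c hc => [|[|c]] // _.
Qed.

Lemma inj_red (k : fieldType) (hchar : (2%N \in [pchar k])%R) (r : ps3 k) :
  (forall a b c, ~~ ((b < 3)%N && (c < 2)%N) -> r a b c = 0) -> kerP r ->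
  forall a b c, r a b c = 0.
Proof.
move=> hred hker; apply: allz => // i a hi.
apply/eqP; rewrite -[_ == _]negbK; apply/negP => hne.
pose Pm (m : nat) : bool := [exists j : 'I_6, exists b : 'I_m.+1,
   (csr r j b != 0) && (m == 6 * b + e6 j)%N].
have hPm : forall j a', (j < 6)%N -> csr r j a' != 0 -> Pm (6 * a' + e6 j)%N.
  move=> j a' hj hne'; apply/existsP; exists (Ordinal hj); apply/existsP.
  have hb : (a' < (6 * a' + e6 j).+1)%N by lia.
  by exists (Ordinal hb); rewrite /= hne' eqxx.
have hex : exists m, Pm m by exists (6 * a + e6 i)%N; exact: hPm.
case: (ex_minnP hex) => m /existsP [j /existsP [b /andP [hjb /eqP hm]]] hmin.
have hmin' : forall j' a', (j' < 6)%N -> csr r j' a' != 0 -> (m <= 6 * a' + e6 j')%N.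
  by move=> j' a' hj' hne'; apply: hmin; apply: hPm.
have E : rho r m = \sum_(i < 6) ((Cp r m i \Po rho_x k) * bet k i)`_m.
  rewrite (@S1 k r m m hred (leqnn m)) -coef_sum -S3 coef_sum; apply: eq_bigr => b' _.
  by rewrite coef_sum; apply: eq_bigr => c _; rewrite S2.
have := hker m; rewrite E (@sum_pickO _ _ _ j); last first.
  move=> j' hj'; rewrite bet_eq //.
  apply: Ki => a' ha'; rewrite coef_Cp; last by lia.
  apply/eqP; rewrite -[_ == _]negbK; apply/negP => hne'.
  have := hmin' j' a' (ltn_ord j') hne' => hle.
  have := @e6_inj j' j a' b (ltn_ord j') (ltn_ord j) => hinj.
  by move: hj'; rewrite hinj ?eqxx //; lia.
rewrite bet_eq // hm Kii; last 2 first.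
- move=> a' ha'; rewrite coef_Cp; last by lia.
  apply/eqP; rewrite -[_ == _]negbK; apply/negP => hne'.
  have := hmin' j a' (ltn_ord j) hne'; lia.
- exact: gam0.
rewrite coef_Cp; last by lia.
by move/eqP; rewrite (negbTE hjb).
Qed.

Lemma ker_g1 (k : fieldType) (hchar : (2%N \in [pchar k])%R) : kerP (g1 k).
Proof. by move=> n; rewrite (@rho_trunc _ (maxn n 5)) ?leq_maxl // ev_g1 ?leq_maxr // coef0. Qed.
Lemma ker_g2 (k : fieldType) (hchar : (2%N \in [pchar k])%R) : kerP (g2 k).
Proof. by move=> n; rewrite (@rho_trunc _ (maxn n 5)) ?leq_maxl // ev_g2 ?leq_maxr // coef0. Qed.

Lemma gen12 (k : fieldType) (hchar : (2%N \in [pchar k])%R) :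
  generates [:: g1 k; g2 k] (@kerP k).
Proof.
move=> f; split; last exact: ideal_ker.
move=> hf.
have hR := inj_red hchar (@Rr_red k f) (Rr_ker hchar hf).
exists (fun i => if i == 0%N then QA f else QB f) => a b c.
rewrite !big_ord_recr big_ord0 /= add0r.
by rewrite {1}(division f a b c) hR add0r.
Qed.

Lemma rho_small (k : fieldType) (f : ps3 k) n : (n < 25)%N ->
  rho f n = \sum_(a < n.+1) \sum_(b < n.+1) \sum_(c < n.+1)
              f a b c * (n == 6 * a + 8 * b + 10 * c)%N%:R.
Proof.
move=> hn; rewrite /rho; apply: eq_bigr => a _; apply: eq_bigr => b _; apply: eq_bigr => c _.
by rewrite Mono_small.
Qed.

Lemma rho_at (k : fieldType) (f : ps3 k) n (a0 b0 c0 : 'I_n.+1) : (n < 25)%N ->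
  n = (6 * a0 + 8 * b0 + 10 * c0)%N ->
  (forall a b c, n = (6 * a + 8 * b + 10 * c)%N -> [/\ a = a0, b = b0 & c = c0]) ->
  rho f n = f a0 b0 c0.
Proof.
move=> hn hn0 huniq; rewrite rho_small //.
rewrite (@sum_pickO _ _ _ a0); last first.
  move=> a ha; apply: big1 => b _; apply: big1 => c _.
  case: eqP => [h|_]; last by rewrite mulr0.
  by have [h1 _ _] := huniq _ _ _ h; move: ha; rewrite h1 eqxx.
rewrite (@sum_pickO _ _ _ b0); last first.
  move=> b hb; apply: big1 => c _.
  case: eqP => [h|_]; last by rewrite mulr0.
  by have [_ h1 _] := huniq _ _ _ h; move: hb; rewrite h1 eqxx.
rewrite (@sum_pickO _ _ _ c0); last first.
  move=> c hc.
  case: eqP => [h|_]; last by rewrite mulr0.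
  by have [_ _ h1] := huniq _ _ _ h; move: hc; rewrite h1 eqxx.
by rewrite -hn0 eqxx mulr1.
Qed.

Lemma ker_low (k : fieldType) (f : ps3 k) : kerP f ->
  [/\ f 0%N 0%N 0%N = 0, f 0%N 1%N 0%N = 0 & f 0%N 0%N 1%N = 0].
Proof.
move=> hf.
have e0 : rho f 0 = f 0%N 0%N 0%N.
  by apply: (@rho_at _ _ 0 ord0 ord0 ord0) => // a b c h; split => /=; lia.
have h1 : (1 < 9)%N by [].
have e8 : rho f 8 = f 0%N 1%N 0%N.
  by apply: (@rho_at _ _ 8 ord0 (Ordinal h1) ord0) => // a b c h; split => /=; lia.
have h2 : (1 < 11)%N by [].
have e10 : rho f 10 = f 0%N 0%N 1%N.
  by apply: (@rho_at _ _ 10 ord0 ord0 (Ordinal h2)) => // a b c h; split => /=; lia.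
by split; [rewrite -e0 | rewrite -e8 | rewrite -e10]; apply: hf.
Qed.

Lemma L002 (k : fieldType) (h f : ps3 k) :
  ps3_mul h f 0 0 2 = h 0 0 0 * f 0 0 2 + h 0 0 1 * f 0 0 1 + h 0 0 2 * f 0 0 0.
Proof. by rewrite /ps3_mul !big_ord_recr !big_ord0 /= !add0r. Qed.
Lemma L020 (k : fieldType) (h f : ps3 k) :
  ps3_mul h f 0 2 0 = h 0 0 0 * f 0 2 0 + h 0 1 0 * f 0 1 0 + h 0 2 0 * f 0 0 0.
Proof. by rewrite /ps3_mul !big_ord_recr !big_ord0 /= !add0r. Qed.
Lemma L030 (k : fieldType) (h f : ps3 k) :
  ps3_mul h f 0 3 0 = h 0 0 0 * f 0 3 0 + h 0 1 0 * f 0 2 0 + h 0 2 0 * f 0 1 0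
                      + h 0 3 0 * f 0 0 0.
Proof. by rewrite /ps3_mul !big_ord_recr !big_ord0 /= !add0r. Qed.

Lemma mingen (k : fieldType) (hchar : (2%N \in [pchar k])%R) :
  min_num_gens (@kerP k) 2.
Proof.
split; first by exists [:: g1 k; g2 k]; split => //; exact: gen12.
move=> gs hgen.
case: gs hgen => [|f [|f2 gs]] hgen //.
  have [h hh] := (hgen (g1 k)).1 (ker_g1 hchar).
  have := hh 0%N 0%N 2%N; rewrite big_ord0 /g1 /ps3_add /ps3_mono /= !addr0.
  by move/eqP; rewrite oner_eq0.
have hf : kerP f.
  apply/(hgen f).2; exists (fun _ => ps3_mono k 0 0 0) => a b c.
  by rewrite big_ord1 /= mul_monol.
have [h hh] := (hgen (g1 k)).1 (ker_g1 hchar).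
have [h' hh'] := (hgen (g2 k)).1 (ker_g2 hchar).
have [f000 f010 f001] := ker_low hf.
have e1 := hh 0%N 0%N 2%N; have e2 := hh 0%N 2%N 0%N.
have e3 := hh' 0%N 0%N 2%N; have e4 := hh' 0%N 3%N 0%N.
rewrite big_ord1 /= L002 f000 f001 !mulr0 !addr0 /g1 /ps3_add /ps3_mono /= !addr0 in e1.
rewrite big_ord1 /= L020 f000 f010 !mulr0 !addr0 /g1 /ps3_add /ps3_mono /= !addr0 in e2.
rewrite big_ord1 /= L002 f000 f001 !mulr0 !addr0 /g2 /ps3_add /ps3_mono /= !addr0 in e3.
rewrite big_ord1 /= L030 f000 f010 !mulr0 !addr0 /g2 /ps3_add /ps3_mono /= !addr0 in e4.
have hh0 : h 0%N 0%N 0%N 0%N != 0.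
  by apply/eqP => h0; move: e1; rewrite h0 mul0r => /eqP; rewrite oner_eq0.
have f002 : f 0%N 0%N 2%N != 0.
  by apply/eqP => h0; move: e1; rewrite h0 mulr0 => /eqP; rewrite oner_eq0.
have f020 : f 0%N 2%N 0%N = 0.
  by move: e2 => /esym /eqP; rewrite mulf_eq0 (negbTE hh0) => /eqP.
have h'0 : h' 0%N 0%N 0%N 0%N = 0.
  by move: e3 => /esym /eqP; rewrite mulf_eq0 (negbTE f002) orbF => /eqP.
by move: e4; rewrite h'0 f020 mul0r mulr0 add0r => /eqP; rewrite oner_eq0.
Qed.

Theorem mainTheorem6 (k : fieldType) (hchar : (2%N \in [pchar k])%R) :
  generates [:: g1 k; g2 k] (@kerP k) /\ min_num_gens (@kerP k) 2.
Proof. by split; [exact: gen12 | exact: mingen]. Qed.
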